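(* Let $A$ be an $n\times n$ real matrix with $n$ distinct (possibly complex) eigenvalues $\lambda_1,\dots,\lambda_n$. For each $i$, let $x_i\in\mathbb{C}^n$ be the left eigenvector of $A$ associated with $\lambda_i$ (i.e. $x_i^H A=\lambda_i x_i^H$) whose Euclidean norm equals $1$ and whose first nonzero entry (counting from the top) is positive. Let $\mathcal{S}_v\subseteq\{1,2,\dots,n\}$. Then there exists a vector $b\in\mathbb{R}^n$ with $\mathrm{Supp}(b)\subseteq\mathcal{S}_v$ such that the continuous-time linear time-invariant system $\frac{dx(t)}{dt}=Ax(t)+bu(t)$ is controllable if and only if $\mathrm{Supp}(x_i)\cap\mathcal{S}_v\neq\emptyset$ for every $i\in\{1,2,\dots,n\}$.
   Context: For a vector $x$, $\mathrm{Supp}(x)$ denotes the set of row indices $j$ with $x_j\neq 0$. The superscript $H$ denotes conjugate transpose. Controllability of $\frac{dx}{dt}=Ax+Bu$ (equivalently, of the pair $(A,B)$) is the usual notion for continuous-time LTI systems. *)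

(* Defs.v *)
From HB Require Import structures.
From mathcomp Require Import all_boot all_order all_algebra.
From mathcomp Require Export complex.
Set Implicit Arguments. Unset Strict Implicit. Unset Printing Implicit Defensive.
Import Order.TTheory GRing.Theory Num.Theory.
Local Open Scope ring_scope.

Definition cplx_mx (R : rcfType) m n (A : 'M[R]_(m, n)) : 'M[R[i]]_(m, n) :=
  map_mx (fun r : R => (r%:C)%C) A.

Definition hermT (C : numClosedFieldType) m n (A : 'M[C]_(m, n)) : 'M[C]_(n, m) :=
  (map_mx (fun z => z^*) A)^T.

Definition supp_sub (T : nzRingType) n (x : 'cV[T]_n) (S : {set 'I_n}) : Prop :=
  forall j : 'I_n, x j 0 != 0 -> j \in S.
Definition supp_meets (T : nzRingType) n (x : 'cV[T]_n) (S : {set 'I_n}) : Prop :=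
  exists2 j : 'I_n, j \in S & x j 0 != 0.

(* Controllability matrix [b, Ab, ..., A^(n-1) b] and controllability of
   dx/dt = A x + b u (Kalman rank condition). *)
Definition ctrb_mx (R : fieldType) n (A : 'M[R]_n) (b : 'cV[R]_n) : 'M[R]_n :=
  \matrix_(i < n, j < n) (A ^+ j *m b) i 0.
Definition controllable (R : fieldType) n (A : 'M[R]_n) (b : 'cV[R]_n) : Prop :=
  \rank (ctrb_mx A b) = n.

Definition unit_norm (C : numClosedFieldType) n (x : 'cV[C]_n) : Prop :=
  \sum_(j < n) `|x j 0| ^+ 2 = 1.
Definition first_nonzero_pos (C : numClosedFieldType) n (x : 'cV[C]_n) : Prop :=
  exists k : 'I_n, 0 < x k 0 /\ forall j : 'I_n, (j < k)%N -> x j 0 = 0.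

(* Main.v *)
Require Import Defs.
From HB Require Import structures.
From mathcomp Require Import all_boot all_order all_algebra.
From mathcomp Require Import complex.
Import Order.TTheory GRing.Theory Num.Theory.
Local Open Scope ring_scope.

Lemma eigX (F : fieldType) n (A : 'M[F]_n) (y : 'rV_n) l :
  y *m A = l *: y -> forall j, y *m A ^+ j = l ^+ j *: y.
Proof.
move=> h; elim=> [|j IH]; first by rewrite expr0 mulmx1 scale1r.
by rewrite exprSr mulmxA IH -scalemxAl h scalerA exprSr.
Qed.

Lemma pbh (F : fieldType) n (A : 'M[F]_n) (b : 'cV_n) (y : 'I_n -> 'rV_n)
   (lam : 'I_n -> F) : injective lam -> (forall i, y i *m A = lam i *: y i) ->
   (forall i, y i != 0) ->
   (controllable A b <-> forall i, (y i *m b) 0 0 != 0).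
Proof.
move=> ilam hA hy0.
have key i j : (y i *m ctrb_mx A b) 0 j = lam i ^+ j * (y i *m b) 0 0.
  rewrite !mxE.
  transitivity ((y i *m (A ^+ j *m b)) 0 0).
    by rewrite mxE; apply: eq_bigr => k _; rewrite mxE.
  by rewrite mulmxA (@eigX _ _ _ _ _ (hA i) j) -scalemxAl !mxE.
rewrite /controllable; split.
- move=> hr i; apply/negP => /eqP h0.
  have uK : ctrb_mx A b \in unitmx by rewrite -row_free_unit /row_free hr.
  have : y i *m ctrb_mx A b = 0.
    by apply/matrixP => a j; rewrite ord1 key h0 mulr0 mxE.
  move=> /(congr1 (mulmx^~ (invmx (ctrb_mx A b)))).
  by rewrite -mulmxA mulmxV // mulmx1 mul0mx; apply/eqP.
- move=> hd.
  pose Y := \matrix_(i, k) y i 0 k.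
  pose d := \row_i (y i *m b) 0 0.
  pose V := Vandermonde n (\row_i lam i).
  have e : Y *m ctrb_mx A b = diag_mx d *m V^T.
    apply/matrixP => i j; rewrite mul_diag_mx !mxE.
    rewrite mulrC; transitivity ((y i *m ctrb_mx A b) 0 j); last by rewrite key mxE.
    by rewrite mxE; apply: eq_bigr => k _; rewrite !mxE.
  have : \det (Y *m ctrb_mx A b) != 0.
    rewrite e det_mulmx det_tr det_diag det_Vandermonde mulf_eq0 negb_or.
    apply/andP; split.
      by rewrite prodf_seq_neq0; apply/allP => i _; rewrite mxE hd.
    rewrite prodf_seq_neq0; apply/allP => i _; rewrite prodf_seq_neq0.
    apply/allP => j _; apply/implyP => hij; rewrite !mxE subr_eq0.
    by apply/eqP => /ilam h; move: hij; rewrite h ltnn.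
  rewrite det_mulmx mulf_eq0 negb_or => /andP[_ hK].
  by apply/eqP; rewrite -[_ == _]/(row_free _) row_free_unit unitmxE unitfE.
Qed.

Lemma map_mxXn (R : rcfType) n (A : 'M[R]_n) j :
  map_mx (real_complex R) (A ^+ j) = (map_mx (real_complex R) A) ^+ j.
Proof.
elim: j => [|j IH]; first by rewrite !expr0 map_mx1.
by rewrite !exprS map_mxM IH.
Qed.

Lemma ctrb_map (R : rcfType) n (A : 'M[R]_n) b :
  controllable A b <-> controllable (cplx_mx A) (cplx_mx b).
Proof.
rewrite /controllable /cplx_mx.
have -> : ctrb_mx (map_mx (fun r : R => (r%:C)%C) A) (map_mx (fun r : R => (r%:C)%C) b)
   = map_mx (real_complex R) (ctrb_mx A b).
  apply/matrixP => i j; rewrite !mxE.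
  rewrite -[map_mx _ A]/(map_mx (real_complex R) A) -[map_mx _ b]/(map_mx (real_complex R) b) -map_mxXn.
  by rewrite rmorph_sum; apply: eq_bigr => k _; rewrite !mxE rmorphM.
by rewrite (mxrank_map (real_complex R)).
Qed.

Lemma nonroot (C : numDomainType) (P : {poly C}) : P != 0 -> exists m : nat, ~~ root P m%:R.
Proof.
move=> P0.
pose rs := [seq (m%:R : C) | m <- iota 0 (size P)].
have : ~~ all (root P) rs.
  apply/negP => hall.
  have hu : uniq rs.
    rewrite map_inj_uniq ?iota_uniq // => a a' /eqP; rewrite eqr_nat => /eqP.
    done.
  by have := max_poly_roots P0 hall hu; rewrite size_map size_iota ltnn.
case/allPn => z /mapP [m _ ->] hm; by exists m.
Qed.

Theorem theorem1 (R : rcfType) (n : nat) (A : 'M[R]_n)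
    (lambda : 'I_n -> R[i]) (x : 'I_n -> 'cV[R[i]]_n) (Sv : {set 'I_n}) :
  injective lambda ->
  (forall i, root (char_poly (cplx_mx A)) (lambda i)) ->
  (forall i, hermT (x i) *m cplx_mx A = lambda i *: hermT (x i)) ->
  (forall i, unit_norm (x i)) ->
  (forall i, first_nonzero_pos (x i)) ->
  (exists b : 'cV[R]_n, supp_sub b Sv /\ controllable A b) <->
  (forall i, supp_meets (x i) Sv).
Proof.
move=> ilam _ heig _ hfn.
have hy0 i : hermT (x i) != 0.
  case: (hfn i) => k [hk _]; apply/eqP => /matrixP /(_ 0 k).
  rewrite !mxE => /eqP; rewrite conjC_eq0 => /eqP h.
  by move: hk; rewrite h ltxx.
have pb b : controllable A b <-> forall i, (hermT (x i) *m cplx_mx b) 0 0 != 0.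
  exact: (iff_trans (@ctrb_map _ _ A b) (@pbh _ _ _ (cplx_mx b) _ _ ilam heig hy0)).
have ent i b : (hermT (x i) *m cplx_mx b) 0 0 = \sum_k (x i k 0)^* * (b k 0)%:C%C.
  by rewrite mxE; apply: eq_bigr => k _; rewrite !mxE.
split.
- case=> b [hs hc] i.
  have := (pb b).1 hc i; rewrite ent => hne.
  have : [exists k, (x i k 0)^* * (b k 0)%:C%C != 0].
    apply: contraR hne => /existsPn h; apply/eqP; rewrite big1 // => k _.
    by move/negPn/eqP: (h k).
  case/existsP => k; rewrite mulf_eq0 negb_or conjC_eq0 => /andP[h1 h2].
  exists k => //; apply: hs; move: h2; apply: contra => /eqP ->; by rewrite rmorph0.
- move=> hm.
  pose c i (k : 'I_n) := if k \in Sv then (x i k 0)^* else 0.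
  pose p i := \sum_(k < n) c i k *: ('X^k : {poly R[i]}).
  pose P := \prod_i p i.
  have pn0 i : p i != 0.
    case: (hm i) => k hk hx; apply/eqP => /(congr1 (fun q : {poly R[i]} => q`_k)).
    rewrite coef_sum coef0 (bigD1 k) //= big1 ?addr0.
      by rewrite coefZ coefXn eqxx mulr1 /c hk => /eqP; rewrite conjC_eq0 (negbTE hx).
    move=> k' hk'; rewrite coefZ coefXn.
    have -> : (nat_of_ord k == nat_of_ord k') = false by rewrite eq_sym; apply/negbTE.
    by rewrite mulr0.
  have Pn0 : P != 0 by rewrite prodf_seq_neq0; apply/allP => i _; apply/implyP => _.
  case: (@nonroot _ _ Pn0) => m hm'.
  pose t : R := m%:R.
  pose b := \col_(k < n) (if k \in Sv then t ^+ k else 0).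
  exists b; split.
    by move=> k; rewrite mxE; case: ifP => //; rewrite eqxx.
  apply/(pb b) => i; rewrite ent.
  have : (p i).[m%:R] != 0.
    move: hm'; rewrite rootE horner_prod prodf_seq_neq0 => /allP /(_ i).
    by rewrite mem_index_enum => /(_ isT).
  suff -> : (p i).[m%:R] = \sum_k (x i k 0)^* * (b k 0)%:C%C by [].
  rewrite horner_sum; apply: eq_bigr => k _.
  rewrite hornerZ hornerXn mxE /c; case: ifP => _.
    by rewrite rmorphXn /= rmorph_nat.
  by rewrite rmorph0 mulr0 mul0r.
Qed.
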